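(* Let $U\subset G$ be an arbitrary unit neighborhood and let $\varepsilon>0$. Then there is a relatively separated and $U$-dense set $\Lambda\subset G$ with uniformity $\mathscr{U}(\Lambda;U)<1+\varepsilon$.
   Context: $G$ is a $\sigma$-compact locally compact group with left Haar measure $\mu_G$; $Q$ a fixed symmetric open relatively compact neighborhood of $e$. $\Lambda$ is relatively separated if $\sup_{x\in G}\#(\Lambda\cap xQ)<\infty$ and $U$-dense if $G=\bigcup_{\lambda\in\Lambda}\lambda U$. A disjoint cover associated to $\Lambda$ and $U$ is a family $(U_\lambda)_{\lambda\in\Lambda}$ of Borel sets with $U_\lambda\subset\lambda U$ whose disjoint union is $G$. The $U$-uniformity is $\mathscr{U}(\Lambda;U)=\inf\{\sup_{\lambda,\lambda'\in\Lambda}\mu_G(U_\lambda)/\mu_G(U_{\lambda'})\}\in[1,\infty]$, the infimum taken over all disjoint covers associated to $\Lambda$ and $U$. *)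

(* Defs.v *)
From HB Require Import structures.
From mathcomp Require Import all_boot all_order all_algebra.
From mathcomp Require Import all_classical all_reals.
From mathcomp Require Import all_analysis.
Set Implicit Arguments. Unset Strict Implicit. Unset Printing Implicit Defensive.
Import Order.TTheory GRing.Theory Num.Theory.
Local Open Scope classical_set_scope.
Local Open Scope ring_scope.

Section LCGroups.
Variables (G : ptopologicalType) (mul : G -> G -> G) (inv : G -> G) (e : G).

Local Notation borelG := (g_sigma_algebraType (@open G)).

Definition lmul (x : G) (A : set G) : set G := [set mul x a | a in A].

Definition is_topgroup : Prop :=
  [/\ associative mul, left_id e mul, left_inverse e inv mul,
      continuous (fun p : G * G => mul p.1 p.2) & continuous inv].

Definition lc_sigma_compact : Prop :=
  [/\ hausdorff_space G,
      (forall x : G, exists K : set G, compact K /\ nbhs x K) &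
      exists K : nat -> set G, (forall n, compact (K n)) /\ \bigcup_n K n = setT].

Definition left_haar (R : realType)
    (mu : {measure set borelG -> \bar R}) : Prop :=
  [/\ (forall (x : G) (A : set borelG), measurable A -> mu (lmul x A) = mu A),
      (forall K : set G, compact K -> (mu K < +oo)%E),
      (forall A : set borelG, measurable A ->
          mu A = ereal_inf [set mu V | V in [set V : set G | open V /\ A `<=` V]]),
      (forall V : set G, open V ->
          mu V = ereal_sup [set mu K | K in [set K : set G | compact K /\ K `<=` V]])
    & exists A : set borelG, measurable A /\ (0 < mu A)%E].

Definition good_Q (Q : set G) : Prop :=
  [/\ open Q, Q e, (forall x, Q x -> Q (inv x)) & compact (closure Q)].

Definition rel_separated (Q Lambda : set G) : Prop :=
  exists N : nat, forall x : G, ((Lambda `&` lmul x Q) #<= `I_N)%card.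

Definition U_dense (Lambda U : set G) : Prop :=
  \bigcup_(l in Lambda) lmul l U = setT.

Definition disjoint_cover (Lambda U : set G) (F : G -> set G) : Prop :=
  [/\ (forall l, Lambda l -> measurable (F l : set borelG)),
      (forall l, Lambda l -> F l `<=` lmul l U),
      trivIset Lambda F &
      \bigcup_(l in Lambda) F l = setT].

(* quotient a/b in [0, +oo], with the convention a/a = 1 (relevant only for
   0/0 and +oo/+oo); otherwise a * b^-1 with 0^-1 = +oo, (+oo)^-1 = 0. *)
Definition eratio (R : realType) (a b : \bar R) : \bar R :=
  if a == b then 1%E else (a * b^-1)%E.

Definition uniformity (R : realType) (mu : {measure set borelG -> \bar R})
    (Lambda U : set G) : \bar R :=
  ereal_inf [set ereal_sup [set eratio (mu (F l)) (mu (F l')) |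
                            l in Lambda & l' in Lambda]
            | F in [set F | disjoint_cover Lambda U F]].

End LCGroups.

Notation borelG G := (g_sigma_algebraType (@open G)).

(* Main.v *)
Require Import Defs.
From HB Require Import structures.
From mathcomp Require Import all_boot all_order all_algebra finmap.
From mathcomp Require Import all_classical all_reals.
From mathcomp Require Import all_analysis wochoice.
From mathcomp Require Import ring lra.
Import Order.TTheory GRing.Theory Num.Theory.
Local Open Scope classical_set_scope.
Local Open Scope ring_scope.
Set Implicit Arguments. Unset Strict Implicit. Unset Printing Implicit Defensive.

Section Grp.
Variables (G : ptopologicalType) (mul : G -> G -> G) (inv : G -> G) (e : G).
Hypothesis TG : is_topgroup mul inv e.

Lemma mulA : associative mul. Proof. by case: TG. Qed.
Lemma mul1g : left_id e mul. Proof. by case: TG. Qed.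
Lemma mulVg : left_inverse e inv mul. Proof. by case: TG. Qed.

Lemma mulKg x y : mul (inv x) (mul x y) = y.
Proof. by rewrite mulA mulVg mul1g. Qed.

Lemma mulgI x : injective (mul x).
Proof. by move=> a b H; rewrite -(mulKg x a) H mulKg. Qed.

Lemma mulgV x : mul x (inv x) = e.
Proof.
by rewrite -{1}(mulKg (inv x) (mul x (inv x))) (mulKg x) mulVg.
Qed.

Lemma mulg1 : right_id e mul.
Proof. by move=> x; rewrite -(mulVg x) mulA mulgV mul1g. Qed.

Lemma mulKVg x y : mul x (mul (inv x) y) = y.
Proof. by rewrite mulA mulgV mul1g. Qed.

Lemma invK x : inv (inv x) = x.
Proof. by rewrite -[LHS]mulg1 -(mulVg x) mulKg. Qed.

Lemma invM x y : inv (mul x y) = mul (inv y) (inv x).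
Proof.
by apply: (@mulgI (mul x y)); rewrite mulgV -mulA mulKVg mulgV.
Qed.

End Grp.

Section Topo.
Variables (G : ptopologicalType) (mul : G -> G -> G) (inv : G -> G) (e : G).
Hypothesis TG : is_topgroup mul inv e.

Lemma contM : continuous (fun p : G * G => mul p.1 p.2). Proof. by case: TG. Qed.
Lemma contV : continuous inv. Proof. by case: TG. Qed.

Lemma inv1 : inv e = e.
Proof. by rewrite -[LHS](mulg1 TG) (mulVg TG). Qed.

Lemma contMl a : continuous (mul a).
Proof.
move=> y A nA.
have H : nbhs (a, y) ((fun p : G * G => mul p.1 p.2) @^-1` A) := @contM (a, y) A nA.
case: H => -[B1 B2] /= [nB1 nB2] sub.
suff : nbhs y (mul a @^-1` A) by [].
apply: (filterS _ nB2) => z B2z.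
exact: (sub (a, z) (conj (nbhs_singleton nB1) B2z)).
Qed.

Lemma contMr a : continuous (mul^~ a).
Proof.
move=> y A nA.
have H : nbhs (y, a) ((fun p : G * G => mul p.1 p.2) @^-1` A) := @contM (y, a) A nA.
case: H => -[B1 B2] /= [nB1 nB2] sub.
suff : nbhs y (mul^~ a @^-1` A) by [].
apply: (filterS _ nB1) => z B1z.
exact: (sub (z, a) (conj B1z (nbhs_singleton nB2))).
Qed.

Lemma lmulE x A : lmul mul x A = (mul (inv x)) @^-1` A.
Proof.
apply/seteqP; split => y.
  by move=> [a Aa <-] /=; rewrite (mulKg TG).
by move=> /= Ay; exists (mul (inv x) y) => //; rewrite (mulKVg TG).
Qed.

Lemma lmul_open x A : open A -> open (lmul mul x A).
Proof.
move=> oA; rewrite lmulE; apply: open_comp => // y _.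
exact: contMl.
Qed.

Lemma lmul_compact x K : compact K -> compact (lmul mul x K).
Proof.
move=> cK; apply: continuous_compact => //.
apply: continuous_subspaceT; exact: contMl.
Qed.

Lemma lmul_sub x A B : A `<=` B -> lmul mul x A `<=` lmul mul x B.
Proof. by move=> AB y [a Aa <-]; exists a => //; apply: AB. Qed.

Lemma lmul_self x A : A e -> lmul mul x A x.
Proof. by move=> Ae; exists e => //; rewrite (mulg1 TG). Qed.

Lemma small_nbhs A : nbhs e A -> exists B, [/\ open B, B e &
  forall a b, B a -> B b -> A (mul a (inv b)) /\ A (mul (inv a) b)].
Proof.
move=> nA.
have nA' : nbhs (mul (e, e).1 (e, e).2) A by rewrite /= (mul1g TG).
have H : nbhs (e, e) ((fun p : G * G => mul p.1 p.2) @^-1` A) := @contM (e, e) A nA'.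
case: H => -[B1 B2] /= [nB1 nB2] sub.
have nB2' : nbhs e (inv @^-1` B2).
  have : nbhs (inv e) B2 by rewrite inv1.
  exact: contV.
have nB1' : nbhs e (inv @^-1` B1).
  have : nbhs (inv e) B1 by rewrite inv1.
  exact: contV.
pose C := B1 `&` inv @^-1` B2 `&` (inv @^-1` B1 `&` B2).
have nC : nbhs e C by apply: filterI; apply: filterI.
exists C°; split.
- exact: open_interior.
- exact: nbhs_singleton (nbhs_interior nC).
- move=> a b /interior_subset [[Ba1 Ba2] [Ba3 Ba4]] /interior_subset [[Bb1 Bb2] [Bb3 Bb4]].
  split; first exact: (sub (a, inv b) (conj Ba1 Bb2)).
  exact: (sub (inv a, b) (conj Ba3 Bb4)).
Qed.

End Topo.

Section Meas.
Variables (R : realType) (G : ptopologicalType) (mul : G -> G -> G) (inv : G -> G) (e : G).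
Variable (mu : {measure set (borelG G) -> \bar R}).
Hypothesis TG : is_topgroup mul inv e.
Hypothesis LC : lc_sigma_compact G.
Hypothesis HA : left_haar mul mu.

Definition mble (A : set G) := measurable (A : set (borelG G)).

Lemma open_mble A : open A -> mble A.
Proof. by move=> oA; apply: sub_sigma_algebra. Qed.

Lemma closed_mble A : closed A -> mble A.
Proof.
move=> cA; rewrite -[A]setCK; apply: measurableC; apply: open_mble.
by rewrite openC.
Qed.

Lemma hausG : hausdorff_space G. Proof. by case: LC. Qed.

Lemma compact_mble A : compact A -> mble A.
Proof. by move=> cA; apply: closed_mble; apply: compact_closed => //; exact: hausG. Qed.

Lemma set1_mble x : mble [set x].
Proof. by apply: compact_mble; exact: compact_set1. Qed.

Lemma mu_lmul x A : mble A -> mu (lmul mul x A) = mu A.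
Proof. by move=> mA; case: HA => H _ _ _ _; exact: H. Qed.

Lemma mu_compact_fin K : compact K -> (mu K < +oo)%E.
Proof. by case: HA => _ H _ _ _; apply: H. Qed.

Lemma mu_le A B : mble A -> mble B -> A `<=` B -> (mu A <= mu B)%E.
Proof. by move=> mA mB AB; apply: le_measure => //; rewrite inE. Qed.

Lemma mu_open_pos V : open V -> V e -> (0 < mu V)%E.
Proof.
move=> oV Ve.
case: HA => _ _ _ Hin [A [mA A0]].
have T0 : (0 < mu setT)%E.
  by apply: lt_le_trans A0 _; apply: mu_le => //; exact: measurableT.
rewrite (Hin setT openT) in T0.
have [_ [K [cK _] <-] K0] := ereal_sup_gt T0.
rewrite lt_def measure_ge0 andbT; apply/negP => /eqP V0.
have cov : K `<=` cover K (fun x => lmul mul x V).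
  by move=> x Kx; exists x => //; apply: (lmul_self TG).
have cK' : cover_compact K by rewrite -compact_cover.
have [D' D'K KD'] := cK' _ K (fun x => lmul mul x V)
  (fun x _ => lmul_open TG x oV) cov.
have := @content_sub_fsum _ _ _ mu G _ K (fun i => lmul mul i V) _ _ _ KD'.
  move=> /(_ (finite_fset _)) /(_ (fun i _ => open_mble (lmul_open TG i oV))).
  move=> /(_ (compact_mble cK)).
rewrite fsbig1 ?leNgt ?K0 // => i _.
by rewrite -V0; apply: mu_lmul; exact: open_mble.
Qed.

Lemma mu_small_open (d : R) : mu [set e] = 0%E -> 0 < d ->
  exists N, [/\ open N, N e & (mu N < d%:E)%E].
Proof.
move=> m0 d0; case: HA => _ _ Hout _ _.
have := Hout [set e] (set1_mble e); rewrite m0 => H0.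
have : (ereal_inf [set mu V | V in [set V : set G | open V /\ [set e] `<=` V]] < d%:E)%E.
  by rewrite -H0 lte_fin.
move=> /ereal_inf_lt [_ [N [oN eN] <-] Nd].
by exists N; split => //; apply: eN.
Qed.

End Meas.

Section Grouping.
Variable R : realFieldType.
Variables (m : nat -> R) (d : R).

Definition psum j := \sum_(i < j) m i.
Definition Hs n T := \sum_(i < n | psum i < T) m i.

Lemma psumS j : psum j.+1 = psum j + m j.
Proof. by rewrite /psum big_ord_recr. Qed.

Lemma HsS n T : Hs n.+1 T = Hs n T + (if psum n < T then m n else 0).
Proof. by rewrite /Hs big_mkcond big_ord_recr /= -big_mkcond. Qed.

Hypothesis mpos : forall i, 0 <= m i.
Hypothesis msmall : forall i, m i < d.

Lemma psum_ge0 j : 0 <= psum j.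
Proof. by apply: sumr_ge0 => i _. Qed.

Lemma psum_le i j : (i <= j)%N -> psum i <= psum j.
Proof.
move=> /subnK <-; elim: (j - i)%N => [|k IH]; first by rewrite add0n.
by rewrite addSn psumS; apply: le_trans IH _; rewrite lerDl.
Qed.

Lemma Hs_prop n :
  (forall T, psum n < T -> Hs n T = psum n) /\
  (forall T, 0 <= T <= psum n -> T <= Hs n T < T + d).
Proof.
have d0 : 0 < d by apply: le_lt_trans (mpos 0) (msmall 0).
elim: n => [|n [IH1 IH2]].
  split; first by move=> T _; rewrite /Hs /psum !big_ord0.
  move=> T /andP[T0 T1]; rewrite /Hs big_ord0.
  have -> : T = 0 by apply/eqP; rewrite eq_le T0 andbT; move: T1; rewrite /psum big_ord0.
  by rewrite lexx /= add0r d0.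
split.
  move=> T lt; rewrite HsS psumS.
  have lt' : psum n < T by apply: le_lt_trans lt; rewrite psumS lerDl.
  by rewrite lt' IH1.
move=> T /andP[T0 T1]; rewrite HsS.
case: ltP => [lt|le].
  rewrite IH1 // -psumS T1 /=.
  by rewrite psumS; apply: ltrD lt (msmall n).
by rewrite addr0; apply: IH2; rewrite T0 le.
Qed.

Definition thr n k t j := if (j < k)%N then j%:R * t else psum n + 1.
Definition grp n k t j i := (thr n k t j <= psum i) && (psum i < thr n k t j.+1).

Lemma Hs_split n a b : a <= b ->
  Hs n b = \sum_(i < n | (a <= psum i) && (psum i < b)) m i + Hs n a.
Proof.
move=> ab; rewrite /Hs (bigID (fun i : 'I_n => a <= psum i)) /=.
congr (_ + _); first by apply: eq_bigl => i; rewrite andbC.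
apply: eq_bigl => i; rewrite -ltNge.
by case: (ltP (psum i) a) => h; rewrite ?andbT ?andbF //; apply: lt_le_trans h ab.
Qed.

Lemma grp_sum n k j : (0 < k)%N -> (j < k)%N ->
  forall t, t = psum n / k%:R ->
  t - d < \sum_(i < n | grp n k t j i) m i < t + d.
Proof.
move=> k0 jk t tE.
have kR : 0 < k%:R :> R by rewrite ltr0n.
have Mt : psum n = k%:R * t by rewrite tE mulrC divfK // gt_eqF.
have t0 : 0 <= t by rewrite tE divr_ge0 ?psum_ge0 ?ler0n.
have [P1 P2] := Hs_prop n.
have lej : forall i, (i <= k)%N -> i%:R * t <= psum n.
  by move=> i ik; rewrite Mt ler_wpM2r // ler_nat.
have thrj : thr n k t j = j%:R * t by rewrite /thr jk.
have Hj := P2 (j%:R * t); rewrite (lej j (ltnW jk)) mulr_ge0 ?ler0n // in Hj.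
have /andP[Hj1 Hj2] := Hj isT.
rewrite /grp thrj.
case: (ltnP j.+1 k) => jk1.
  have thrj1 : thr n k t j.+1 = j.+1%:R * t by rewrite /thr jk1.
  rewrite thrj1 -(@addrK _ (Hs n (j%:R * t)) (\sum_(i < n | _) m i)).
  rewrite -Hs_split; last by rewrite ler_wpM2r // ler_nat.
  have Hj' := P2 (j.+1%:R * t); rewrite (lej j.+1 (ltnW jk1)) mulr_ge0 ?ler0n // in Hj'.
  have /andP[Hk1 Hk2] := Hj' isT.
  rewrite -natr1 mulrDl mul1r in Hk1 Hk2.
  apply/andP; split; lra.
have thrj1 : thr n k t j.+1 = psum n + 1 by rewrite /thr ltnNge jk1.
rewrite thrj1 -(@addrK _ (Hs n (j%:R * t)) (\sum_(i < n | _) m i)).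
rewrite -Hs_split; last by apply: le_trans (lej j (ltnW jk)) _; rewrite lerDl ler01.
rewrite P1; last by rewrite ltrDl ltr01.
have kj : k = j.+1 by apply/eqP; rewrite eqn_leq jk1 jk.
rewrite Mt kj -natr1 mulrDl mul1r.
apply/andP; split; lra.
Qed.

Lemma thr_mono n k t : t = psum n / k%:R -> (0 < k)%N ->
  forall i j, (i <= j)%N -> thr n k t i <= thr n k t j.
Proof.
move=> tE k0.
have kR : 0 < k%:R :> R by rewrite ltr0n.
have Mt : psum n = k%:R * t by rewrite tE mulrC divfK // gt_eqF.
have t0 : 0 <= t by rewrite tE divr_ge0 ?psum_ge0 ?ler0n.
have step : forall j, thr n k t j <= thr n k t j.+1.
  move=> j; rewrite /thr; case: (ltnP j.+1 k) => jk1.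
    by rewrite (ltnW jk1) ler_wpM2r // ler_nat.
  case: (ltnP j k) => jk //.
  have : j%:R * t <= k%:R * t by rewrite ler_wpM2r // ler_nat ltnW.
  rewrite Mt; lra.
move=> i j /subnK <-; elim: (j - i)%N => [|l IH]; first by rewrite add0n.
by rewrite addSn; apply: le_trans IH (step _).
Qed.

Lemma grp_disj n k t : t = psum n / k%:R -> (0 < k)%N ->
  forall i j j', grp n k t j i -> grp n k t j' i -> j = j'.
Proof.
move=> tE k0 i j j' /andP[a1 a2] /andP[b1 b2].
have mono := thr_mono tE k0.
case: (ltngtP j j') => // h; exfalso.
  have := mono _ _ h; lra.
have := mono _ _ h; lra.
Qed.

Lemma find_interval (f : nat -> R) x K : f 0%N <= x -> x < f K ->
  exists2 j, (j < K)%N & (f j <= x) && (x < f j.+1).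
Proof.
move=> lo; elim: K => [|K IH] hi.
  by move: lo; rewrite leNgt hi.
case: (ltP x (f K)) => h.
  by have [j jK hj] := IH h; exists j => //; apply: ltnW.
by exists K => //; rewrite h hi.
Qed.

Lemma grp_cover n k t : t = psum n / k%:R -> (0 < k)%N ->
  forall i, (i <= n)%N -> exists2 j, (j < k)%N & grp n k t j i.
Proof.
move=> tE k0 i iin.
have mono := thr_mono tE k0.
have lo : thr n k t 0 <= psum i by rewrite /thr k0 mul0r psum_ge0.
have hi : psum i < thr n k t k.
  rewrite /thr ltnn; have := psum_le iin; lra.
have [j jk /andP[h1 h2]] := find_interval lo hi.
by exists j => //; rewrite /grp h1 h2.
Qed.

End Grouping.

Local Open Scope card_scope.

Lemma fset_bound_card (T : choiceType) (S : set T) N :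
  (forall X : {fset T}, [set` X] `<=` S -> (#|` X| <= N)%N) -> S #<= `I_N.
Proof.
move=> H.
have fin : finite_set S.
  apply: contrapT => inf.
  have [X XS XN] := infinite_set_fset N.+1 inf.
  by have := H X XS; rewrite leqNgt XN.
have [X SX] := finite_fsetP.1 fin; subst S.
rewrite (card_le_eql (introT card_eq_fsetP (erefl #|` X|))) card_le_II.
exact: H.
Qed.

Section Count.
Variables (R : realType) (G : ptopologicalType).
Variable (mu : {measure set (borelG G) -> \bar R}).

Lemma sum_const_seq (s : seq G) (c : R) :
  (\sum_(i <- s) (c%:E) = ((size s)%:R * c)%:E)%E.
Proof.
elim: s => [|x s IH]; first by rewrite big_nil mul0r.
by rewrite big_cons IH -EFinD /= -natr1 mulrDl mul1r addrC.
Qed.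

Lemma count_sep (S A : set G) (F : G -> set G) (c B : R) : 0 < c ->
  mble A -> (mu A <= B%:E)%E -> trivIset S F ->
  (forall s, S s -> mble (F s)) -> (forall s, S s -> c%:E <= mu (F s))%E ->
  (forall s, S s -> F s `<=` A) -> S #<= `I_((Num.truncn (B / c)).+1).
Proof.
move=> c0 mA AB tF mF cF FA; apply: fset_bound_card => X XS.
have mU : mble (\bigcup_(i in [set` X]) F i).
  by apply: fin_bigcup_measurable => // i /XS; exact: mF.
have le1 : (mu (\bigcup_(i in [set` X]) F i) <= B%:E)%E.
  apply: le_trans AB; apply: mu_le => //.
  by move=> x [i Xi Fix]; exact: (FA i (XS i Xi)).
rewrite measure_fin_bigcup in le1; first last.
- by move=> i /XS; exact: mF.
- exact: sub_trivIset tF.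
- exact: finite_fset.
rewrite -fsbig_seq ?fset_uniq // in le1.
have : (\sum_(i <- X) (c%:E) <= B%:E)%E.
  apply: le_trans le1; rewrite big_seq_cond [leRHS]big_seq_cond.
  by apply: lee_sum => i /andP[iX _]; apply: cF; apply: XS.
rewrite sum_const_seq lee_fin => h.
rewrite -ltnS -(ltr_nat R).
have := truncnS_gt (B / c).
have : (size X)%:R <= B / c by rewrite ler_pdivlMr.
move=> h1 h2; apply: le_lt_trans h1 (lt_le_trans h2 _).
by rewrite ler_nat.
Qed.

End Count.

Lemma wo_strict (T : eqType) : exists lt : T -> T -> Prop,
  [/\ (forall a b, a <> b -> lt a b \/ lt b a),
      (forall a b, lt a b -> lt b a -> False) &
      (forall A : set T, A !=set0 -> exists2 z, A z & forall y, A y -> ~ lt y z)].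
Proof.
have [Rw wo] := well_ordering_principle T.
have minP : forall A : set T, A !=set0 ->
    exists z, [/\ A z, forall y, A y -> Rw z y &
      forall z', A z' -> (forall y, A y -> Rw z' y) -> z' = z].
  move=> A [x Ax].
  have ne : wochoice.nonempty [pred y | `[< A y >]].
    by exists x; rewrite inE.
  have [z [[zin lb] uq]] := wo _ ne.
  exists z; split.
  - by move: zin; rewrite inE.
  - by move=> y Ay; apply: lb; rewrite inE.
  - move=> z' Az' lb'; apply/esym/uq; split; first by rewrite inE.
    by move=> y; rewrite inE; apply: lb'.
have refl : forall a, Rw a a.
  move=> a; have [z [za lb _]] := minP [set a] (ex_intro _ a erefl).
  by rewrite -za; apply: lb.
have anti : forall a b, Rw a b -> Rw b a -> a = b.
  move=> a b ab ba.
  have [z [zin lb uq]] := minP [set a; b] (ex_intro _ a (or_introl erefl)).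
  have -> : a = z by apply: uq; [left | move=> y [->|->]].
  by apply/esym/uq; [right | move=> y [->|->]].
exists (fun a b => Rw a b /\ a <> b); split.
- move=> a b ab.
  have [z [zin lb _]] := minP [set a; b] (ex_intro _ a (or_introl erefl)).
  case: zin => zE; rewrite zE in lb.
    by left; split => //; apply: lb; right.
  by right; split => //; [apply: lb; left | move=> h; apply: ab].
- by move=> a b [ab nab] [ba _]; apply: nab; apply: anti.
- move=> A neA; have [z [zin lb _]] := minP A neA.
  exists z => // y Ay [yz nyz]; apply: nyz; apply: anti => //; exact: lb.
Qed.

Lemma max_sep (T : Type) (B : T -> set T) : (forall x, B x x) ->
  exists L : set T,
    (forall l l', L l -> L l' -> l <> l' -> B l `&` B l' = set0) /\
    (forall x, exists2 l, L l & B x `&` B l !=set0).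
Proof.
move=> Bxx.
pose P := [set S : set T | forall l l', S l -> S l' -> l <> l' -> B l `&` B l' = set0].
have [|L [PL maxL]] := @Zorn_bigcup T P.
  move=> F FP Ftot l l' [X FX Xl] [Y FY Yl'] ll'.
  have [XY|YX] := Ftot X Y FX FY.
    by apply: (FP Y FY) => //; apply: XY.
  by apply: (FP X FX) => //; apply: YX.
exists L; split => // x.
apply: contrapT => H.
have Lx : ~ L x.
  move=> Lx; apply: H; exists x => //; exists x; split; exact: Bxx.
apply: (maxL (L `|` [set x])).
  split; first by move=> y Ly; left.
  by move=> E; apply: Lx; apply: E; right.
move=> l l' [Ll|->] [Ll'|->] ll'.
- exact: PL.
- apply: contrapT => /eqP/set0P ne; apply: H; exists l => //.
  by rewrite setIC.
- apply: contrapT => /eqP/set0P ne; apply: H; exists l' => //.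
- by exfalso; apply: ll'.
Qed.

Section Cells.
Variables (G : ptopologicalType) (mul : G -> G -> G) (inv : G -> G) (e : G).
Hypothesis TG : is_topgroup mul inv e.
Variables (W0 V Lam : set G) (lt : G -> G -> Prop).
Hypotheses (oW0 : open W0) (oV : open V) (Ve : V e).
Hypothesis VW0 : forall a b, V a -> V b -> W0 (mul a (inv b)).
Hypothesis sepL : forall l l', Lam l -> Lam l' -> l <> l' ->
  lmul mul l V `&` lmul mul l' V = set0.
Hypothesis maxL : forall x, exists2 l, Lam l & lmul mul x V `&` lmul mul l V !=set0.
Hypothesis ltot : forall a b, a <> b -> lt a b \/ lt b a.
Hypothesis lasym : forall a b, lt a b -> lt b a -> False.
Hypothesis lmin : forall A : set G, A !=set0 -> exists2 z, A z & forall y, A y -> ~ lt y z.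

Definition Ocell := \bigcup_(l in Lam) lmul mul l V.
Definition Ecell l := lmul mul l V `|`
  (lmul mul l W0 `\` (Ocell `|` \bigcup_(l' in [set l' | Lam l' /\ lt l' l]) lmul mul l' W0)).

Lemma VsubW0 : V `<=` W0.
Proof.
move=> a Va; have := VW0 Va Ve.
by rewrite (inv1 TG) (mulg1 TG).
Qed.

Lemma Ecell_sub l : Ecell l `<=` lmul mul l W0.
Proof. by move=> x [h|[h _]] //; exact: (lmul_sub VsubW0 h). Qed.

Lemma Ecell_sup l : lmul mul l V `<=` Ecell l.
Proof. by move=> x h; left. Qed.

Lemma Ocell_open : open Ocell.
Proof. by apply: bigcup_open => l _; exact: (lmul_open TG). Qed.

Lemma Ecell_mble l : mble (Ecell l).
Proof.
apply: measurableU; first by apply: open_mble; exact: (lmul_open TG).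
apply: measurableD; first by apply: open_mble; exact: (lmul_open TG).
apply: open_mble; apply: openU; first exact: Ocell_open.
by apply: bigcup_open => l' _; exact: (lmul_open TG).
Qed.

Lemma Ecell_cover : \bigcup_(l in Lam) Ecell l = setT.
Proof.
apply/seteqP; split => // x _.
have [Ox|nOx] := pselect (Ocell x).
  by case: Ox => l Ll Vx; exists l => //; left.
pose A := [set l | Lam l /\ lmul mul l W0 x].
have neA : A !=set0.
  have [l Ll [y [[a Va ya] [b Vb yb]]]] := maxL x.
  exists l; split => //; exists (mul b (inv a)); first exact: VW0.
  rewrite (mulA TG) yb -ya -(mulA TG) (mulgV TG) (mulg1 TG).
  by [].
have [z [Lz Wz] zmin] := lmin neA.
exists z => //; right; split => //.
move=> [//|[l' [Ll' ltl'] Wl']].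
by apply: (zmin l').
Qed.

Lemma Ecell_triv : trivIset Lam Ecell.
Proof.
have key : forall l l', Lam l -> Lam l' -> lt l l' ->
    Ecell l `&` Ecell l' !=set0 -> False.
  move=> l l' Ll Ll' ll' [x [El El']].
  have ne : l <> l' by move=> h; subst l'; exact: (lasym ll' ll').
  case: El => [Vl|[Wl nl]]; case: El' => [Vl'|[Wl' nl']].
  - have := sepL Ll Ll' ne; rewrite -subset0 => /(_ x); apply; split => //.
  - by apply: nl'; left; exists l.
  - by apply: nl; left; exists l'.
  - by apply: nl'; right; exists l.
move=> l l' Ll Ll' ne; apply: contrapT => nll'.
have [h|h] := ltot nll'.
  exact: (key l l' Ll Ll' h ne).
by apply: (key l' l Ll' Ll h); rewrite setIC.
Qed.

End Cells.

Lemma mem_bigsetU (T : Type) n (P : pred 'I_n) (F : 'I_n -> set T) x :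
  (\big[setU/set0]_(i < n | P i) F i) x <-> exists2 i : 'I_n, P i & F i x.
Proof.
rewrite -(bigcup_pred P F); split.
  by move=> [i Pi Fi]; exists i.
by move=> [i Pi Fi]; exists i.
Qed.

Section Bits.
Variables (R : realType) (G : ptopologicalType) (mul : G -> G -> G) (inv : G -> G) (e : G).
Variable (mu : {measure set (borelG G) -> \bar R}).
Hypothesis TG : is_topgroup mul inv e.
Hypothesis HA : left_haar mul mu.
Variables (N : set G) (E : set G) (ys : seq G).
Hypothesis oN : open N.
Hypothesis mE : mble E.
Hypothesis Ecov : forall x, E x -> exists2 y, y \in ys & lmul mul y N x.

Definition bit i := E `&` lmul mul (nth e ys i) N `\`
  \big[setU/set0]_(j < i) lmul mul (nth e ys j) N.

Lemma bit_mble i : mble (bit i).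
Proof.
apply: measurableD; first apply: measurableI => //.
  by apply: open_mble; exact: (lmul_open TG).
by apply: bigsetU_measurable => j _; apply: open_mble; exact: (lmul_open TG).
Qed.

Lemma bit_le i : (mu (bit i) <= mu N)%E.
Proof.
rewrite -(mu_lmul HA (nth e ys i) (open_mble oN)).
apply: mu_le; first exact: bit_mble.
  by apply: open_mble; exact: (lmul_open TG).
by move=> x [[_ h] _].
Qed.

Lemma bit_sub i : bit i `<=` E.
Proof. by move=> x [[]]. Qed.

Lemma bit_disj i j : bit i `&` bit j !=set0 -> i = j.
Proof.
move=> [x [[[_ hi] ni] [[_ hj] nj]]].
case: (ltngtP i j) => // h; exfalso.
  by apply: nj; apply/mem_bigsetU; exists (Ordinal h).
by apply: ni; apply/mem_bigsetU; exists (Ordinal h).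
Qed.

Lemma bit_cover x : E x -> exists2 i, (i < size ys)%N & bit i x.
Proof.
move=> Ex; pose p := fun y => `[< lmul mul y N x >].
have hs : has p ys.
  have [y yin hy] := Ecov Ex; apply/hasP; exists y => //.
  by rewrite /p; apply/asboolP.
exists (find p ys); first by rewrite -has_find.
split; first split => //.
  by have := nth_find e hs; rewrite /p => /asboolP.
move=> /mem_bigsetU [j _ hj].
have := before_find e (ltn_ord j); rewrite /p => /asboolP; apply.
exact: hj.
Qed.

Lemma E_bigU : E = \big[setU/set0]_(i < size ys) bit i.
Proof.
apply/seteqP; split => x.
  move=> Ex; have [i ilt bx] := bit_cover Ex.
  by apply/mem_bigsetU; exists (Ordinal ilt).
by move=> /mem_bigsetU [i _ bx]; exact: bit_sub bx.
Qed.

Lemma bit_triv n : trivIset setT (fun i : 'I_n => bit i).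
Proof.
move=> i j _ _ ne; apply: val_inj; exact: bit_disj ne.
Qed.

End Bits.

Section Pieces.
Variables (R : realType) (G : ptopologicalType) (mul : G -> G -> G) (inv : G -> G) (e : G).
Variable (mu : {measure set (borelG G) -> \bar R}).
Hypothesis TG : is_topgroup mul inv e.
Hypothesis HA : left_haar mul mu.
Variables (Lam : set G) (Ec : G -> set G) (N : set G) (ys : G -> seq G) (a c d : R).
Hypothesis oN : open N.
Hypothesis Emble : forall l, mble (Ec l).
Hypothesis Ecov : forall l x, Ec l x -> exists2 y, y \in ys l & lmul mul y N x.
Hypothesis Efin : forall l, (mu (Ec l) < +oo)%E.
Hypothesis Ebig : forall l, Lam l -> (a%:E <= mu (Ec l))%E.
Hypothesis Nd : (mu N < d%:E)%E.
Hypothesis c0 : 0 < c.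
Hypothesis ca : c < a.

Definition nb l := size (ys l).
Definition bt l i := bit mul e N (Ec l) (ys l) i.
Definition mb l i := fine (mu (bt l i)).
Definition Mc l := psum (mb l) (nb l).
Definition kc l := Num.truncn (Mc l / c).
Definition tc l := Mc l / (kc l)%:R.
Definition piece l j := \big[setU/set0]_(i < nb l | grp (mb l) (nb l) (kc l) (tc l) j i) bt l i.

Lemma bt_mble l i : mble (bt l i).
Proof. exact: (bit_mble TG (ys l) oN (Emble l)). Qed.

Lemma bt_fin l i : mu (bt l i) = (mb l i)%:E.
Proof.
rewrite /mb fineK // ge0_fin_numE //.
apply: le_lt_trans (bit_le TG HA _ oN (Emble l) i) _.
by apply: lt_le_trans Nd _; rewrite leey.
Qed.

Lemma mb_ge0 l i : 0 <= mb l i.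
Proof. by rewrite -lee_fin -bt_fin. Qed.

Lemma mb_lt l i : mb l i < d.
Proof.
rewrite -lte_fin -bt_fin; apply: le_lt_trans Nd.
exact: (bit_le TG HA _ oN (Emble l) i).
Qed.

Lemma muE l : mu (Ec l) = (Mc l)%:E.
Proof.
rewrite {1}(E_bigU e (Ecov (l:=l))) measure_bigsetU_ord; last first.
- exact: bit_triv.
- by move=> i; exact: bt_mble.
rewrite /Mc /psum -sumEFin; apply: eq_bigr => i _.
exact: bt_fin.
Qed.

Lemma Mc_ge l : Lam l -> a <= Mc l.
Proof. by move=> Ll; rewrite -lee_fin -muE; apply: Ebig. Qed.

Lemma kc_gt0 l : Lam l -> (0 < kc l)%N.
Proof.
move=> Ll; have := Mc_ge Ll => Ma.
have := c0; have := ca => c0' ca'.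
rewrite /kc truncn_ge_nat; last by apply: divr_ge0; lra.
by rewrite ler_pdivlMr // mul1r; lra.
Qed.

Lemma piece_mble l j : mble (piece l j).
Proof. by apply: bigsetU_measurable => i _; exact: bt_mble. Qed.

Lemma piece_sub l j : piece l j `<=` Ec l.
Proof. by move=> x /mem_bigsetU [i _ /bit_sub]. Qed.

Lemma tc_bounds l : Lam l -> c <= tc l /\ tc l < c + c ^+ 2 / (a - c).
Proof.
move=> Ll; have := c0; have := ca => ca' c0'.
have Ma := Mc_ge Ll.
have k0 := kc_gt0 Ll.
have kR : 0 < (kc l)%:R :> R by rewrite ltr0n.
have M0 : 0 <= Mc l / c by apply: divr_ge0; lra.
have kle : (kc l)%:R <= Mc l / c by rewrite /kc truncn_le.
have kgt : Mc l / c < (kc l).+1%:R by exact: truncnS_gt.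
rewrite ler_pdivlMr // in kle.
rewrite ltr_pdivrMr // -natr1 in kgt.
have tk : tc l * (kc l)%:R = Mc l by rewrite /tc divfK // gt_eqF.
split.
  by rewrite /tc ler_pdivlMr // mulrC.
pose y := c ^+ 2 / (a - c).
have ya : y * (a - c) = c ^+ 2 by rewrite /y divfK // subr_eq0 gt_eqF.
have y0 : 0 < y by rewrite /y divr_gt0 ?exprn_gt0 // subr_gt0.
have kc1 : a - c < (kc l)%:R * c by lra.
have yk : c < y * (kc l)%:R.
  have : y * (a - c) < y * ((kc l)%:R * c) by rewrite ltr_pM2l.
  rewrite ya expr2 mulrA => h.
  by rewrite -(ltr_pM2r c0) (lt_le_trans h) // mulrC.
rewrite -/y -(ltr_pM2r kR) tk mulrDl.
nra.
Qed.

Lemma piece_mu l j : Lam l -> (j < kc l)%N ->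
  exists x, mu (piece l j) = x%:E /\ c - d < x < c + c ^+ 2 / (a - c) + d.
Proof.
move=> Ll jk.
have [tlo thi] := tc_bounds Ll.
exists (\sum_(i < nb l | grp (mb l) (nb l) (kc l) (tc l) j i) mb l i); split.
  rewrite /piece measure_bigsetU_ord; last 2 first.
  - by move=> i; exact: bt_mble.
  - exact: bit_triv.
  by rewrite -sumEFin; apply: eq_bigr => i _; exact: bt_fin.
have := @grp_sum R (mb l) d (mb_ge0 l) (mb_lt l) (nb l) (kc l) j (kc_gt0 Ll) jk (tc l) erefl.
move=> /andP[h1 h2]; apply/andP; split; lra.
Qed.

Lemma piece_disj l j j' : Lam l -> piece l j `&` piece l j' !=set0 -> j = j'.
Proof.
move=> Ll [x [/mem_bigsetU [i gi bi] /mem_bigsetU [i' gi' bi']]].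
have ii : i = i' :> nat by apply: (@bit_disj _ mul e N (Ec l) (ys l)); exists x.
have := c0; have := ca => ca' c0'.
move: gi'; rewrite -ii => gi'.
exact: (grp_disj (mb_ge0 l) erefl (kc_gt0 Ll) gi gi').
Qed.

Lemma piece_cover l x : Lam l -> Ec l x -> exists2 j, (j < kc l)%N & piece l j x.
Proof.
move=> Ll Ex; have [i ilt bi] := bit_cover e (Ecov (l:=l)) Ex.
have [j jk gj] := grp_cover (mb_ge0 l) erefl (kc_gt0 Ll) (ltnW ilt).
by exists j => //; apply/mem_bigsetU; exists (Ordinal ilt).
Qed.

Hypothesis Etriv : trivIset Lam Ec.
Hypothesis EcovT : \bigcup_(l in Lam) Ec l = setT.
Variables (W0 W U Q KK : set G).
Hypothesis Esub : forall l, Ec l `<=` lmul mul l W0.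
Hypothesis W0W : forall a b, W0 a -> W0 b -> W (mul (inv a) b).
Hypothesis WU : W `<=` U.
Hypothesis QWK : forall q w, Q q -> W w -> KK (mul q w).
Hypothesis cKK : compact KK.
Hypothesis dc : d < c.
Hypothesis LC : lc_sigma_compact G.

Definition Pidx := [set p : G * nat | Lam p.1 /\ (p.2 < kc p.1)%N].
Definition pc (p : G * nat) := piece p.1 p.2.
Definition pt p := xget e (pc p).
Definition Lam2 := pt @` Pidx.
Definition F2 x := \bigcup_(p in [set p | Pidx p /\ pt p = x]) pc p.

Lemma pc_mu p : Pidx p ->
  exists x, mu (pc p) = x%:E /\ c - d < x < c + c ^+ 2 / (a - c) + d.
Proof. by move=> [Lp kp]; exact: piece_mu. Qed.

Lemma pc_ne p : Pidx p -> pc p (pt p).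
Proof.
move=> Pp; apply: xgetPex; apply: contrapT => ne.
have e0 : pc p = set0 by apply/seteqP; split => // z pz; apply: ne; exists z.
have [x [mx /andP[h1 _]]] := pc_mu Pp.
move: mx; rewrite e0 measure0 => /esym [x0]; subst x.
by move: h1 dc; lra.
Qed.

Lemma pc_triv p p' : Pidx p -> Pidx p' -> pc p `&` pc p' !=set0 -> p = p'.
Proof.
move: p p' => [l j] [l' j'] [/= Ll jk] [/= Ll' jk'] [x [px px']].
have ll : l = l'.
  apply: Etriv => //; exists x; split; [exact: piece_sub px | exact: piece_sub px'].
subst l'; congr (_, _); apply: (piece_disj Ll); exists x; split; [exact: px | exact: px'].
Qed.

Lemma F2_pt p : Pidx p -> F2 (pt p) = pc p.
Proof.
move=> Pp; apply/seteqP; split => y.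
  move=> [p' [Pp' ptp] py].
  have pp : p' = p.
    by apply: pc_triv => //; exists (pt p); split => //; [rewrite -ptp; exact: pc_ne | exact: pc_ne].
  by rewrite -pp.
by move=> py; exists p.
Qed.

Lemma pc_sub_W p : Pidx p -> pc p `<=` lmul mul (pt p) W.
Proof.
move=> Pp y py.
have [w1 Ww1 yw1] := Esub (piece_sub py).
have [w2 Ww2 tw2] := Esub (piece_sub (pc_ne Pp)).
exists (mul (inv w2) w1); first exact: W0W.
by rewrite -tw2 (mulA TG) -(mulA TG p.1) (mulgV TG) (mulg1 TG).
Qed.

Lemma main_cover : disjoint_cover mul Lam2 U F2.
Proof.
split.
- by move=> _ [p Pp <-]; rewrite F2_pt //; exact: piece_mble.
- move=> _ [p Pp <-]; rewrite F2_pt //.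
  by move=> y /(pc_sub_W Pp); apply: lmul_sub.
- move=> _ _ [p Pp <-] [p' Pp' <-]; rewrite !F2_pt // => ne.
  by rewrite (pc_triv Pp Pp' ne).
- apply/seteqP; split => // x _.
  have : (\bigcup_(l in Lam) Ec l) x by rewrite EcovT.
  move=> [l Ll Ex]; have [j jk px] := piece_cover Ll Ex.
  have Pp : Pidx (l, j) by [].
  by exists (pt (l, j)); [exists (l, j) | rewrite F2_pt].
Qed.

Lemma F2_mu l : Lam2 l ->
  exists x, mu (F2 l) = x%:E /\ c - d < x < c + c ^+ 2 / (a - c) + d.
Proof. by move=> [p Pp <-]; rewrite F2_pt //; exact: pc_mu. Qed.

Lemma ratio_bound l l' : Lam2 l -> Lam2 l' ->
  (eratio (mu (F2 l)) (mu (F2 l')) <=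
    ((c + c ^+ 2 / (a - c) + d) / (c - d))%:E)%E.
Proof.
move=> L1 L2.
have [x [-> /andP[x1 x2]]] := F2_mu L1.
have [y [-> /andP[y1 y2]]] := F2_mu L2.
have := dc => dc'.
set hi := c + c ^+ 2 / (a - c) + d in x2 y2 *.
have lo0 : 0 < c - d by lra.
set z := hi / (c - d).
have zlo : z * (c - d) = hi by rewrite /z divfK // gt_eqF.
have z0 : 0 <= z by nra.
rewrite /eratio; case: eqP => _.
  by rewrite lee_fin; nra.
have y0 : y != 0 by apply/negP => /eqP y0; subst y; lra.
rewrite inver (negbTE y0) -EFinM lee_fin.
rewrite ler_pdivrMr; last by lra.
nra.
Qed.

Lemma rel_sep : rel_separated mul Q Lam2.
Proof.
have := dc => dc'.
have tr : trivIset Lam2 F2 by case: main_cover.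
eexists => x.
apply: (@count_sep _ _ mu _ (lmul mul x KK) F2 (c - d) (fine (mu KK))).
- by lra.
- by apply: (compact_mble LC); exact: (lmul_compact TG).
- rewrite (mu_lmul HA x (compact_mble LC cKK)) fineK // ge0_fin_numE //.
  exact: (mu_compact_fin HA cKK).
- by apply: sub_trivIset tr => z [].
- by move=> _ [[p Pp <-] _]; rewrite F2_pt //; exact: piece_mble.
- by move=> z [Lz _]; have [r [-> /andP[r1 _]]] := F2_mu Lz; rewrite lee_fin ltW.
- move=> _ [[p Pp <-] [q Qq xq]] y; rewrite F2_pt // => /(pc_sub_W Pp) [w Ww <-].
  by rewrite -xq; exists (mul q w); [exact: QWK | rewrite (mulA TG)].
Qed.

End Pieces.

Lemma atomic_case (R : realType) (G : ptopologicalType)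
    (mul : G -> G -> G) (inv : G -> G) (e : G)
    (mu : {measure set (borelG G) -> \bar R}) (Q U : set G) (eps : R) :
  is_topgroup mul inv e -> lc_sigma_compact G -> left_haar mul mu ->
  good_Q inv e Q -> nbhs e U -> 0 < eps -> mu [set e] != 0%E ->
  exists Lambda : set G,
    [/\ rel_separated mul Q Lambda, U_dense mul Lambda U &
        (uniformity mul mu Lambda U < (1 + eps)%:E)%E].
Proof.
move=> TG LC HA [oQ Qe Qinv cQ] nU eps0 m0.
have Ue : U e by exact: nbhs_singleton.
have set1E x : lmul mul x [set e] = [set x].
  apply/seteqP; split => y; first by move=> [z -> <-]; rewrite (mulg1 TG).
  by move=> ->; exists e => //; rewrite (mulg1 TG).
have mux x : mu [set x] = mu [set e].
  by rewrite -(set1E x); exact: (mu_lmul HA x (set1_mble LC e)).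
have cov : disjoint_cover mul setT U (fun x => [set x]).
  split.
  - by move=> x _; exact: (set1_mble LC).
  - by move=> x _ y ->; exists e => //; rewrite (mulg1 TG).
  - by move=> x y _ _ [z [-> ->]].
  - by apply/seteqP; split => // x _; exists x.
exists setT; split.
- have fin : (mu (closure Q) < +oo)%E by exact: (mu_compact_fin HA cQ).
  have mQ : mble (closure Q) by exact: (compact_mble LC cQ).
  have me_le : (mu [set e] <= mu (closure Q))%E.
    apply: mu_le => //; first exact: (set1_mble LC).
    by move=> y ->; apply: subset_closure.
  have mfin : mu [set e] \is a fin_num.
    by rewrite ge0_fin_numE //; apply: le_lt_trans fin.
  have m0' : 0 < fine (mu [set e]).
    by rewrite -lte_fin fineK // lt_def m0 /=.
  eexists => x.
  apply: (@count_sep _ _ mu _ (lmul mul x (closure Q)) (fun y => [set y])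
      (fine (mu [set e])) (fine (mu (closure Q)))) => //.
  - by apply: (compact_mble LC); exact: (lmul_compact TG).
  - rewrite (mu_lmul HA x mQ) fineK // ge0_fin_numE //.
  - by move=> y z _ _ [w [-> ->]].
  - by move=> y _; exact: (set1_mble LC).
  - by move=> y _; rewrite mux fineK.
  - move=> y [_ [q Qq <-]] z ->; exists q => //; exact: subset_closure.
- apply/seteqP; split => // x _.
  by exists x => //; exists e => //; rewrite (mulg1 TG).
- have H1 : (uniformity mul mu setT U <= 1%:E)%E.
    apply: le_trans (ereal_inf_lbound _) _.
      by exists (fun x => [set x]); first exact: cov.
    apply: ge_ereal_sup => _ [l _ [l' _ <-]].
    by rewrite /eratio !mux eqxx.
  by apply: le_lt_trans H1 _; rewrite lte_fin ltrDl.
Qed.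

Lemma final_arith (R : realFieldType) (a eta eps : R) :
  0 < a -> 0 < eta -> 16 * eta <= 1 -> 16 * eta <= eps ->
  forall c d, c = a * eta -> d = c * eta ->
  (c + c ^+ 2 / (a - c) + d) / (c - d) < 1 + eps.
Proof.
move=> a0 et0 et1 eteps c d cE dE.
have c0 : 0 < c by rewrite cE mulr_gt0.
have ac : 0 < a - c by rewrite cE; nra.
have dc : 0 < c - d by rewrite dE; nra.
set y := c ^+ 2 / (a - c).
have ya : y * (a - c) = c ^+ 2 by rewrite /y divfK // gt_eqF.
have y0 : 0 <= y by rewrite /y divr_ge0 ?sqr_ge0 // ltW.
have h1 : y * a * 15 <= c * a * eta * 16.
  rewrite cE in ya *; nra.
have h2 : y * 15 <= c * eta * 16 by nra.
rewrite ltr_pdivrMr //.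
rewrite dE; nra.
Qed.

Lemma nonatomic_case (R : realType) (G : ptopologicalType)
    (mul : G -> G -> G) (inv : G -> G) (e : G)
    (mu : {measure set (borelG G) -> \bar R}) (Q U : set G) (eps : R) :
  is_topgroup mul inv e -> lc_sigma_compact G -> left_haar mul mu ->
  good_Q inv e Q -> nbhs e U -> 0 < eps -> mu [set e] = 0%E ->
  exists Lambda : set G,
    [/\ rel_separated mul Q Lambda, U_dense mul Lambda U &
        (uniformity mul mu Lambda U < (1 + eps)%:E)%E].
Proof.
move=> TG LC HA GQ nU eps0 m0.
case: (GQ) => oQ Qe Qinv cQ.
have [K0 [cK0 nK0]] : exists K, compact K /\ nbhs e K by case: LC => _ H _; exact: H.
pose W := (U `&` K0)°.
have oW : open W by exact: open_interior.
have We : W e by apply: nbhs_singleton; apply: nbhs_interior; apply: filterI.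
have WU : W `<=` U by move=> x /interior_subset [].
have WK : W `<=` K0 by move=> x /interior_subset [].
pose Kc := closure W.
have cKc : compact Kc.
  apply: (@subclosed_compact _ Kc K0); first exact: closed_closure.
    exact: cK0.
  have -> : K0 = closure K0.
    by apply/closure_id; apply: compact_closed => //; exact: hausG LC.
  exact: closureS.
have WKc : W `<=` Kc by exact: subset_closure.
have nW : nbhs e W by apply: open_nbhs_nbhs.
have [B0 [oB0 B0e B0W]] := small_nbhs TG nW.
pose W0 := B0 `&` W.
have oW0 : open W0 by apply: openI.
have W0W : forall a b, W0 a -> W0 b -> W (mul (inv a) b).
  by move=> a b [Ba _] [Bb _]; case: (B0W a b Ba Bb).
have nW0 : nbhs e W0 by apply: open_nbhs_nbhs.
have [V [oV Ve VW0']] := small_nbhs TG nW0.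
have VW0 : forall a b, V a -> V b -> W0 (mul a (inv b)).
  by move=> a b Va Vb; case: (VW0' a b Va Vb).
have VsubW0 : V `<=` W0.
  by move=> x Vx; have := VW0 x e Vx Ve; rewrite (inv1 TG) (mulg1 TG).
pose KK := (fun p : G * G => mul p.1 p.2) @` (closure Q `*` Kc).
have cKK : compact KK.
  apply: continuous_compact; last exact: compact_setX.
  by apply: continuous_subspaceT; exact: (contM TG).
have QWK : forall q w, Q q -> W w -> KK (mul q w).
  by move=> q w Qq Ww; exists (q, w) => //; split; [exact: subset_closure | exact: WKc].
have [Lam [sepL maxL]] := @max_sep G (fun x => lmul mul x V) (fun x => lmul_self TG x Ve).
have [lt [ltot lasym lmin]] := wo_strict G.
pose Ec := Ecell mul W0 V Lam lt.
have Emble : forall l, mble (Ec l) by move=> l; exact: (Ecell_mble TG Lam lt oW0 oV).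
have Esub : forall l, Ec l `<=` lmul mul l W0 by move=> l; exact: (Ecell_sub TG Ve VW0).
have Etriv : trivIset Lam Ec by exact: (Ecell_triv sepL ltot lasym).
have EcovT : \bigcup_(l in Lam) Ec l = setT by exact: (Ecell_cover TG VW0 maxL lmin).
have muV0 : (0 < mu V)%E by exact: (mu_open_pos TG LC HA oV Ve).
have mKc : mble Kc by exact: (compact_mble LC cKc).
have KcFin : (mu Kc < +oo)%E by exact: (mu_compact_fin HA cKc).
have EKc : forall l, Ec l `<=` lmul mul l Kc.
  move=> l x /Esub; apply: lmul_sub => y [_ Wy]; exact: WKc.
have mlKc : forall l, mble (lmul mul l Kc).
  by move=> l; apply: (compact_mble LC); exact: (lmul_compact TG).
have Vfin : mu V \is a fin_num.
  rewrite ge0_fin_numE //; apply: le_lt_trans KcFin.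
  apply: mu_le => //; first exact: open_mble.
  by move=> x /VsubW0 [_ /WKc].
pose a := fine (mu V).
have muVa : mu V = a%:E by rewrite fineK.
have a0 : 0 < a by rewrite -lte_fin -muVa.
pose e1 := Num.min eps 1.
have e10 : 0 < e1 by rewrite /e1 lt_min eps0 ltr01.
have e11 : e1 <= 1 by rewrite /e1 ge_min lexx orbT.
have e1e : e1 <= eps by rewrite /e1 ge_min lexx.
pose eta := e1 / 16.
have eta0 : 0 < eta by rewrite /eta divr_gt0.
have eta1 : 16 * eta <= 1 by rewrite /eta mulrC divfK.
have etae : 16 * eta <= eps by rewrite /eta mulrC divfK.
pose c := a * eta.
pose d := c * eta.
have c0 : 0 < c by rewrite /c mulr_gt0.
have ca : c < a by rewrite /c; nra.
have dc : d < c by rewrite /d; nra.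
have d0 : 0 < d by rewrite /d mulr_gt0.
have [N [oN Ne Nd]] := mu_small_open LC HA m0 d0.
have ex_ys : forall l, exists ys : seq G,
    forall x, Ec l x -> exists2 y, y \in ys & lmul mul y N x.
  move=> l.
  have cK' : cover_compact (lmul mul l Kc).
    by rewrite -compact_cover; exact: (lmul_compact TG).
  have cov : lmul mul l Kc `<=` cover (lmul mul l Kc) (fun y => lmul mul y N).
    by move=> x Kx; exists x => //; exact: (lmul_self TG).
  have [D' _ KD'] := cK' _ (lmul mul l Kc) (fun y => lmul mul y N)
    (fun y _ => lmul_open TG y oN) cov.
  exists D' => x /EKc /KD' [y Dy Ny].
  by exists y.
have [ys Ecov] := choice ex_ys.
have Ebig : forall l, Lam l -> (a%:E <= mu (Ec l))%E.
  move=> l _; rewrite -muVa -(mu_lmul HA l (open_mble oV)).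
  apply: mu_le => //; first by apply: open_mble; exact: (lmul_open TG).
  exact: Ecell_sup.
have MC := main_cover TG HA oN Emble Ecov Ebig Nd c0 ca Etriv EcovT Esub W0W WU dc.
exists (Lam2 mul e mu Lam Ec N ys c); split.
- exact: (rel_sep TG HA oN Emble Ecov Ebig Nd c0 ca Etriv EcovT Esub W0W WU QWK cKK dc LC).
- case: MC => _ sub _ cov.
  apply/seteqP; split => // x _.
  have : (\bigcup_(l in Lam2 mul e mu Lam Ec N ys c) F2 mul e mu Lam Ec N ys c l) x.
    by rewrite cov.
  by move=> [l Ll Fx]; exists l => //; apply: sub.
- have H1 : (uniformity mul mu (Lam2 mul e mu Lam Ec N ys c) U <=
      ((c + c ^+ 2 / (a - c) + d) / (c - d))%:E)%E.
    apply: le_trans (ereal_inf_lbound _) _.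
      by exists (F2 mul e mu Lam Ec N ys c); first exact: MC.
    apply: ge_ereal_sup => _ [l Ll [l' Ll' <-]].
    exact: (ratio_bound TG HA oN Emble Ecov Ebig Nd c0 ca Etriv dc Ll Ll').
  apply: le_lt_trans H1 _; rewrite lte_fin.
  exact: (@final_arith _ _ _ _ a0 eta0 eta1 etae c d erefl erefl).
Qed.


Theorem lemma5p4 (R : realType) (G : ptopologicalType)
    (mul : G -> G -> G) (inv : G -> G) (e : G)
    (mu : {measure set (borelG G) -> \bar R}) (Q U : set G) (eps : R) :
  is_topgroup mul inv e -> lc_sigma_compact G -> left_haar mul mu ->
  good_Q inv e Q -> nbhs e U -> 0 < eps ->
  exists Lambda : set G,
    [/\ rel_separated mul Q Lambda, U_dense mul Lambda U &
        (uniformity mul mu Lambda U < (1 + eps)%:E)%E].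
Proof.
move=> TG LC HA GQ nU eps0.
have [m0|m0] := eqVneq (mu [set e]) 0%E.
  exact: (nonatomic_case TG LC HA GQ nU eps0 m0).
exact: (atomic_case TG LC HA GQ nU eps0 m0).
Qed.
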